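(* Let $\mathcal{V}$ be a finite-dimensional inner product space with inner product $\langle\cdot,\cdot\rangle$ and distance $d(x,y)=\sqrt{\langle x-y,x-y\rangle}$, let $\mathcal{S}\subseteq\mathcal{V}$ be the state space and $U:\mathcal{S}\to\mathcal{S}$ a map such that $\mathcal{S}$ is bounded (there is $D$ with $d(s,t)<D$ for all $s,t\in\mathcal{S}$) and $\langle U(s),U(t)\rangle=\langle s,t\rangle$ for all $s,t\in\mathcal{S}$. Then the system is uniformly recurrent in metric: for every $\epsilon>0$ there is an integer $n>0$ such that $d(U(n)s,s)<\epsilon$ for all $s\in\mathcal{S}$.
   Context: $U(n)$ denotes the $n$-fold composition of $U$. *)

(* Defs.v *)
From HB Require Import structures.
From mathcomp Require Import all_boot all_order all_algebra.
From mathcomp Require Import complex reals.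
Set Implicit Arguments. Unset Strict Implicit. Unset Printing Implicit Defensive.
Import Order.TTheory GRing.Theory Num.Theory.
Local Open Scope ring_scope.

(* The finite-dimensional (complex) inner product space V = C^k, with
   vectors represented as row vectors 'rV[R[i]]_k, R a real field. *)

Definition inner (R : realType) (k : nat) (x y : 'rV[R[i]]_k) : R[i] :=
  \sum_(j < k) x 0 j * (y 0 j)^*.

(* Distance d(x,y) = sqrt <x-y,x-y>; <x-y,x-y> is real and >= 0, so we take
   the real square root of its real part. *)
Definition dist (R : realType) (k : nat) (x y : 'rV[R[i]]_k) : R :=
  Num.sqrt (complex.Re (inner (x - y) (x - y))).

(* Main.v *)
Require Import Defs.
From HB Require Import structures.
From mathcomp Require Import all_boot all_order all_algebra.
From mathcomp Require Import complex reals ring lra.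
From Stdlib Require Import ClassicalEpsilon Classical.
Import Order.TTheory GRing.Theory Num.Theory.
Local Open Scope ring_scope.

Section S.
Variables (R : realType) (k : nat).
Implicit Types v w x y : 'rV[R[i]]_k.

Definition nrm2 v : R := complex.Re (inner v v).

Lemma nrm2E v : nrm2 v = \sum_(j < k) ((complex.Re (v 0 j))^+2 + (complex.Im (v 0 j))^+2).
Proof.
rewrite /nrm2 /inner.
apply: (big_rec2 (fun a b => complex.Re b = a)) => // j a b _ <-.
case: (v 0 j) => x y; case: b => p q /=; ring.
Qed.

Lemma nrm2_ge0 v : 0 <= nrm2 v.
Proof. rewrite nrm2E; apply: sumr_ge0 => j _; apply: addr_ge0; apply: sqr_ge0. Qed.

Lemma innerBB x y : inner (x - y) (x - y) = inner x x - inner x y - inner y x + inner y y.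
Proof.
rewrite /inner -!sumrB -big_split; apply: eq_bigr => j _.
rewrite !mxE rmorphB /=; ring.
Qed.

Lemma dist_lt x y (e : R) : 0 < e -> (dist x y < e) = (nrm2 (x - y) < e ^+ 2).
Proof.
move=> e0; rewrite /dist -[X in _ < X]ger0_norm ?ltW // -sqrtr_sqr.
by rewrite ltr_sqrt // exprn_gt0.
Qed.

Lemma quasi_tri x y w : nrm2 (x - w) <= 2 * nrm2 (x - y) + 2 * nrm2 (y - w).
Proof.
rewrite !nrm2E !mulr_sumr -big_split; apply: ler_sum => j _.
rewrite !mxE; case: (x 0 j) => a b; case: (y 0 j) => c d; case: (w 0 j) => e f /=.
have := sqr_ge0 (a - 2 * c + e); have := sqr_ge0 (b - 2 * d + f); nra.
Qed.

Lemma coord_bound v (D : R) j : 0 < D -> nrm2 v < D ^+ 2 ->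
  (-D < complex.Re (v 0 j) < D) /\ (-D < complex.Im (v 0 j) < D).
Proof.
move=> D0; rewrite nrm2E (bigD1 j) //= => H.
have H2 : 0 <= \sum_(i < k | i != j) ((complex.Re (v 0 i))^+2 + (complex.Im (v 0 i))^+2).
  by apply: sumr_ge0 => i _; apply: addr_ge0; apply: sqr_ge0.
move: H H2; case: (v 0 j) => a b /= H H2.
split; apply/andP; split; nra.
Qed.

End S.
Arguments nrm2 {R k} v.
Arguments nrm2E {R k} v.
Arguments nrm2_ge0 {R k} v.
Arguments innerBB {R k} x y.
Arguments dist_lt {R k} x y e.
Lemma q_close (R : realType) (D h x y : R) : 0 < h -> -D < x -> -D < y ->
  Num.truncn ((x + D) / h) = Num.truncn ((y + D) / h) -> (x - y) ^+ 2 <= h ^+ 2.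
Proof.
move=> h0 hx hy E.
have hX : 0 <= (x + D) / h by rewrite divr_ge0 // ?ltW //; lra.
have hY : 0 <= (y + D) / h by rewrite divr_ge0 // ?ltW //; lra.
have /andP[a1 a2] := truncn_itv hX; have /andP[b1 b2] := truncn_itv hY.
rewrite E -addn1 natrD in a1 a2; rewrite -addn1 natrD in b2.
move: ((Num.truncn ((y + D) / h))%:R) a1 a2 b1 b2 => n a1 a2 b1 b2.
have ex : x + D = (x + D) / h * h by rewrite divfK // gt_eqF.
have ey : y + D = (y + D) / h * h by rewrite divfK // gt_eqF.
move: a1 a2 b1 b2 ex ey; move: ((x + D) / h) ((y + D) / h) => X Y a1 a2 b1 b2 ex ey.
have d1 : x - y < h by nra.
have d2 : y - x < h by nra.
nra.
Qed.

Lemma q_bound (R : realType) (D h x : R) : 0 < h -> -D < x -> x < D ->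
  (Num.truncn ((x + D) / h) < (Num.truncn ((D + D) / h)).+1)%N.
Proof.
move=> h0 hx1 hx2; rewrite ltnS; apply: le_truncn.
by rewrite ler_pM2r ?invr_gt0 //; lra.
Qed.

Lemma pigeon (T : finType) (f : nat -> T) : exists p q, (p < q)%N /\ f p = f q.
Proof.
pose g : 'I_(#|T|.+1) -> T := fun i => f i.
have : ~~ injectiveb g.
  apply/negP => /injectiveP inj; have := leq_card g inj.
  by rewrite card_ord ltnn.
case/injectivePn => i [j ij E].
case: (ltngtP i j) => [lt|gt|eq].
- by exists i, j.
- by exists j, i.
- by move: ij; rewrite (val_inj eq) eqxx.
Qed.

Theorem theorem6 (R : realType) (k : nat)
  (S : 'rV[R[i]]_k -> Prop) (U : 'rV[R[i]]_k -> 'rV[R[i]]_k)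
  (HUS : forall s, S s -> S (U s))
  (Hbounded : exists D : R, forall s t, S s -> S t -> dist s t < D)
  (Hinner : forall s t, S s -> S t -> inner (U s) (U t) = inner s t) :
  forall eps : R, 0 < eps ->
    exists n : nat, (0 < n)%N /\
      forall s, S s -> dist (iter n U s) s < eps.
Proof.
move=> eps e0.
case: (classic (exists s0, S s0)) => [[s0 Hs0]|nS]; last first.
  by exists 1%N; split => // s Ss; exfalso; apply: nS; exists s.
case: Hbounded => D HD.
have D0 : 0 < D by apply: le_lt_trans (sqrtr_ge0 _) (HD s0 s0 Hs0 Hs0).
have HB : forall s, S s -> nrm2 (s - s0) < D ^+ 2.
  by move=> s Ss; rewrite -dist_lt //; apply: HD.
have iso1 : forall x y, S x -> S y -> nrm2 (U x - U y) = nrm2 (x - y).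
  by move=> x y Sx Sy; rewrite /nrm2 !innerBB !Hinner.
have Sit : forall n x, S x -> S (iter n U x).
  by elim => //= n IH x Sx; apply: HUS; apply: IH.
have isoN : forall n x y, S x -> S y ->
    nrm2 (iter n U x - iter n U y) = nrm2 (x - y).
  by elim => //= n IH x y Sx Sy; rewrite iso1; [exact: IH | exact: Sit | exact: Sit].
pose K : R := k%:R.
have K0 : 0 <= K by rewrite /K ler0n.
pose h := eps / (4 * (K + 1)).
have h0 : 0 < h by rewrite /h divr_gt0 //; lra.
have Heps : eps = h * (4 * (K + 1)) by rewrite /h divfK //; apply/eqP; lra.
pose t := Num.truncn ((D + D) / h).
pose qq (x : R) : 'I_t.+1 := inord (Num.truncn ((x + D) / h)).
pose code (v : 'rV[R[i]]_k) : {ffun 'I_k -> 'I_t.+1 * 'I_t.+1} :=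
  [ffun j => (qq (complex.Re (v 0 j - s0 0 j)), qq (complex.Im (v 0 j - s0 0 j)))].
have code_close : forall v w, S v -> S w -> code v = code w ->
    nrm2 (v - w) <= K * (2 * h ^+ 2).
  move=> v w Sv Sw E; rewrite nrm2E.
  apply: (@le_trans _ _ (\sum_(j < k) (2 * h ^+ 2))); last first.
    by rewrite sumr_const card_ord /K [X in _ <= X]mulr_natl.
  apply: ler_sum => j _.
  have := congr1 (fun F : {ffun 'I_k -> 'I_t.+1 * 'I_t.+1} => F j) E; rewrite !ffunE => -[E1 E2].
  have [/andP[r1 r2] /andP[i1 i2]] := @coord_bound R k (v - s0) D j D0 (HB v Sv).
  have [/andP[r3 r4] /andP[i3 i4]] := @coord_bound R k (w - s0) D j D0 (HB w Sw).
  rewrite !mxE in r1 r2 i1 i2 r3 r4 i3 i4.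
  have := congr1 val E1; rewrite /qq /= !inordK ?q_bound // => E1'.
  have := congr1 val E2; rewrite /qq /= !inordK ?q_bound // => E2'.
  have Q1 := @q_close R D h _ _ h0 r1 r3 E1'.
  have Q2 := @q_close R D h _ _ h0 i1 i3 E2'.
  move: Q1 Q2; rewrite !mxE; case: (v 0 j) => a b; case: (w 0 j) => c d.
  case: (s0 0 j) => e f /= Q1 Q2.
  have -> : a - c = a + - e - (c + - e) by ring.
  have -> : b - d = b + - f - (d + - f) by ring.
  lra.
pose rep (c : {ffun 'I_k -> 'I_t.+1 * 'I_t.+1}) :=
  epsilon (inhabits s0) (fun s => S s /\ code s = c).
pose F (n : nat) := [ffun c => code (iter n U (rep c))].
have [p [q [pq Fpq]]] := @pigeon _ F.
exists (q - p)%N; split; first by rewrite subn_gt0.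
move=> s Ss; rewrite dist_lt //.
have [Sr cr] : S (rep (code s)) /\ code (rep (code s)) = code s.
  by apply: (epsilon_spec (inhabits s0) (fun x => S x /\ code x = code s)); exists s.
have Hc := congr1 (fun G : {ffun {ffun 'I_k -> 'I_t.+1 * 'I_t.+1} -> {ffun 'I_k -> 'I_t.+1 * 'I_t.+1}} => G (code s)) Fpq; rewrite /= !ffunE in Hc.
move: (rep (code s)) Sr cr Hc => r Sr cr Hc.
have eq1 : iter q U s = iter p U (iter (q - p) U s) by rewrite -iterD subnKC // ltnW.
have -> : nrm2 (iter (q - p) U s - s) = nrm2 (iter q U s - iter p U s)
  by rewrite eq1 isoN //; apply: Sit.
have A : nrm2 (iter q U s - iter q U r) <= K * (2 * h ^+ 2).
  by rewrite isoN //; apply: code_close => //; rewrite cr.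
have B : nrm2 (iter q U r - iter p U r) <= K * (2 * h ^+ 2).
  by apply: code_close; [exact: Sit | exact: Sit | rewrite Hc].
have C : nrm2 (iter p U r - iter p U s) <= K * (2 * h ^+ 2).
  by rewrite isoN //; apply: code_close.
have T1 := @quasi_tri R k (iter q U s) (iter q U r) (iter p U s).
have T2 := @quasi_tri R k (iter q U r) (iter p U r) (iter p U s).
have T : nrm2 (iter q U s - iter p U s) <= 10 * (K * (2 * h ^+ 2)) by lra.
apply: (le_lt_trans T); rewrite Heps.
have hh : 0 < h ^+ 2 by rewrite exprn_gt0.
have P : 0 < 16 * K ^+ 2 + 12 * K + 16 by nra.
nra.
Qed.
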